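(* Let $f\in\mathrm{Dom}_+(\Gamma)$ be a strictly positive bounded function and $b=\sup_{x\in\mathbb X}f(x)$. Assume there exists an increasing (not necessarily strictly) function $g:(0,\infty)\to(0,\infty)$ with $\int_0^b\frac{dy}{g(y)}<\infty$. If $\Gamma f(x)\le-g(f(x))$ for all $x\in\mathbb X$, then $\mathbb E_x\zeta<\infty$ for all $x\in\mathbb X$.
   Context: Let $\mathbb X$ be a countably infinite set and $\Gamma=(\Gamma_{xy})_{x,y\in\mathbb X}$ a matrix with $\Gamma_{xy}\ge0$ for $y\ne x$, $\gamma_x:=\sum_{y\ne x}\Gamma_{xy}$, $\Gamma_{xx}=-\gamma_x$, and $0<\gamma_x<\infty$ for all $x$. Let $P_{xy}=\Gamma_{xy}/\gamma_x$ for $y\neq x$ and $P_{xx}=0$; the discrete-time chain $(\tilde\xi_n)$ with transition matrix $P$ (embedded jump chain) is assumed irreducible. The continuous-time Markov chain $(\xi_t)_{t\ge0}$ with generator $\Gamma$: conditionally on $\tilde\xi$, holding times $\sigma_n$ ($n\ge1$) are independent exponential with parameter $\gamma_{\tilde\xi_{n-1}}$; $J_0=0$, $J_n=\sigma_1+\dots+\sigma_n$; explosion time $\zeta=\lim_n J_n$; $\xi_t=\tilde\xi_n$ on $[J_n,J_{n+1})$ and $\xi_t=\partial$ (cemetery) for $t\ge\zeta$. $\mathbb E_x$ refers to $\xi_0=x$. $\mathrm{Dom}(\Gamma)=\{f:\mathbb X\to\mathbb R:\ \sum_{y\ne x}\Gamma_{xy}|f(y)|<\infty\ \forall x\}$,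 $\mathrm{Dom}_+(\Gamma)$ its non-negative elements, $\Gamma f(x)=\sum_{y}\Gamma_{xy}f(y)$. *)

(* Defs.v *)
From HB Require Import structures.
From mathcomp Require Import all_boot all_order all_algebra.
From mathcomp Require Import all_classical all_reals all_analysis.
Set Implicit Arguments. Unset Strict Implicit. Unset Printing Implicit Defensive.
Import Order.TTheory GRing.Theory Num.Theory.
Import numFieldNormedType.Exports.
Local Open Scope classical_set_scope.
Local Open Scope ring_scope.

Section MarkovDefs.
Context {R : realType} {X : countType}.
Variable Gam : X -> X -> R.

Definition gammaE (x : X) : \bar R := (\esum_(y in ~` [set x]) (Gam x y)%:E)%E.
Definition gammaR (x : X) : R := fine (gammaE x).

Definition Qmatrix : Prop :=
  (forall x y, x != y -> 0 <= Gam x y) /\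
  (forall x, (0 < gammaE x)%E /\ (gammaE x < +oo)%E) /\
  (forall x, Gam x x = - gammaR x).

Definition Pjump (x y : X) : R := if y == x then 0 else Gam x y / gammaR x.

(* irreducibility of the jump chain: every y reachable from every x by a
   path with positive transition probabilities (n = 0 steps allowed) *)
Definition jump_irreducible : Prop :=
  forall x y : X, exists s : seq X,
    path (fun a b => 0 < Pjump a b) x s && (last x s == y).

Definition in_Dom (f : X -> R) : Prop :=
  forall x, (\esum_(y in ~` [set x]) (Gam x y * `|f y|)%:E < +oo)%E.

Definition in_Dom_plus (f : X -> R) : Prop := in_Dom f /\ forall x, 0 <= f x.

(* Gamma f (x) = sum_y Gamma_xy f(y); used for f in Dom_+(Gamma), where the
   off-diagonal terms are nonnegative and summable *)
Definition Gen (f : X -> R) (x : X) : R :=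
  Gam x x * f x + fine (\esum_(y in ~` [set x]) (Gam x y * f y)%:E)%E.

(* (xi, sigma) on a probability space realize the CTMC with generator Gam
   started at x0: xi n is the embedded jump chain, sigma n (n >= 1) the
   holding times; finite-dimensional distributions:
   P(xi_0 = x_0,..,xi_n = x_n, sigma_1 > t_1,..,sigma_n > t_n)
     = 1_{x_0 = x0} prod_{k<n} P_{x_k x_{k+1}} exp(-gamma_{x_k} t_{k+1}). *)
Definition is_CTMC {d : measure_display} {T : measurableType d}
  (P : probability T R) (x0 : X) (xi : nat -> T -> X) (sigma : nat -> T -> R)
  : Prop :=
  (forall n (y : X), measurable [set w | xi n w = y]) /\
  (forall n, measurable_fun setT (sigma n)) /\
  (forall n w, 0 <= sigma n w) /\
  (forall (n : nat) (xs : nat -> X) (ts : nat -> R),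
     (forall k, 0 <= ts k) ->
     P [set w | (forall k, (k <= n)%N -> xi k w = xs k) /\
                (forall k, (k < n)%N -> ts k.+1 < sigma k.+1 w)]
     = (((xs 0%N == x0)%:R) *
        \prod_(k < n) (Pjump (xs k) (xs k.+1) *
                       expR (- (gammaR (xs k) * ts k.+1))))%:E).

Definition zeta {T : Type} (sigma : nat -> T -> R) (w : T) : \bar R :=
  (\sum_(1 <= n <oo) (sigma n w)%:E)%E.

End MarkovDefs.

(* Main.v *)
Require Import Defs.
From HB Require Import structures.
From mathcomp Require Import all_boot all_order all_algebra.
From mathcomp Require Import all_classical all_reals all_analysis.
From mathcomp Require Import ring lra measurable_realfun.
Import Order.TTheory GRing.Theory Num.Theory.
Import numFieldNormedType.Exports.
Local Open Scope classical_set_scope.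
Local Open Scope ring_scope.
Section CSum.
Local Open Scope ereal_scope.
Context {R : realType} {X : countType}.
Definition cterm (a : X -> \bar R) (i : nat) : \bar R :=
  if @pickle_inv X i is Some y then a y else 0.
Definition csum (a : X -> \bar R) : \bar R := \sum_(i <oo) cterm a i.

Lemma cterm_ge0 a : (forall y, 0 <= a y) -> forall i, 0 <= cterm a i.
Proof. by move=> a0 i; rewrite /cterm; case: pickle_inv. Qed.

Lemma csum_esum a : (forall y, 0 <= a y) -> csum a = \esum_(y in [set: X]) a y.
Proof.
move=> a0; rewrite /csum nneseries_esumT; last exact: cterm_ge0.
rewrite (esumID (range (@pickle X))); last by move=> i _; exact: cterm_ge0.
rewrite [X in _ + X]esum1 ?adde0; last first.
  move=> i [_ /= Hi]; rewrite /cterm; case E: pickle_inv => [y|//].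
  by exfalso; apply: Hi; exists y => //; rewrite -(@pickle_invK X i) E.
rewrite setTI (reindex_esum [set: X] _ (@pickle X)); last first.
  split.
  - by move=> y _; exists y.
  - by move=> y z _ _; apply: (pcan_inj (@pickleK X)).
  - by move=> i [y _ <-]; exists y.
by apply: eq_esum => y _; rewrite /cterm pickleK_inv.
Qed.

Lemma csum_ge0 a : (forall y, 0 <= a y) -> 0 <= csum a.
Proof. by move=> a0; apply: nneseries_ge0 => n _ _; apply: cterm_ge0. Qed.

Lemma csumD a b : (forall y, 0 <= a y) -> (forall y, 0 <= b y) ->
  csum (fun y => a y + b y) = csum a + csum b.
Proof.
move=> a0 b0; rewrite /csum -nneseriesD; last 2 first.
- by move=> i _ _; apply: cterm_ge0.
- by move=> i _ _; apply: cterm_ge0.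
by apply: eq_eseriesr => i _; rewrite /cterm; case: pickle_inv => //; rewrite adde0.
Qed.

Lemma csumZl a (c : R) : (forall y, 0 <= a y) ->
  csum (fun y => c%:E * a y) = c%:E * csum a.
Proof.
move=> a0; rewrite /csum -nneseriesZl; last by move=> i _; apply: cterm_ge0.
by apply: eq_eseriesr => i _; rewrite /cterm; case: pickle_inv => //; rewrite mule0.
Qed.

Lemma csumZr a (c : R) : (forall y, 0 <= a y) ->
  csum (fun y => a y * c%:E) = csum a * c%:E.
Proof.
move=> a0; rewrite muleC -csumZl//; congr csum; apply: funext => y; exact: muleC.
Qed.

Lemma le_csum a b : (forall y, 0 <= a y) -> (forall y, a y <= b y) ->
  csum a <= csum b.
Proof.
move=> a0 ab; apply: lee_nneseries; first by move=> i _ _; apply: cterm_ge0.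
by move=> i _; rewrite /cterm; case: pickle_inv.
Qed.

Lemma csum_swap (a : X -> X -> \bar R) : (forall y z, 0 <= a y z) ->
  csum (fun y => csum (fun z => a y z)) = csum (fun z => csum (fun y => a y z)).
Proof.
move=> a0.
have -> : csum (fun y => csum (fun z => a y z)) =
   \sum_(i <oo) \sum_(j <oo) (cterm (fun y => cterm (fun z => a y z) j) i).
  apply: eq_eseriesr => i _; rewrite /cterm; case: pickle_inv => [y //|].
  by apply/esym; rewrite eseries0.
rewrite nneseries_interchange; last first.
  by move=> i j; apply: cterm_ge0 => y; apply: cterm_ge0.
apply: eq_eseriesr => j _; rewrite /csum /cterm; case: pickle_inv => [z|].
  by apply: eq_eseriesr => i _; case: pickle_inv.
by rewrite eseries0// => i _ _; case: pickle_inv.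
Qed.

Lemma csum_single a (x : X) : (forall y, 0 <= a y) -> (forall y, y != x -> a y = 0) ->
  csum a = a x.
Proof.
move=> a0 ax; rewrite csum_esum// (esumID [set x]); last by [].
rewrite [X in _ + X]esum1 ?adde0; last by move=> y [_ /= /eqP] /ax.
by rewrite setTI esum_set1.
Qed.

End CSum.
Section Jump.
Local Open Scope ereal_scope.
Context {R : realType} {X : countType} (Gam : X -> X -> R).
Hypothesis HQ : Qmatrix Gam.

Lemma esumC1 (a : X -> \bar R) (y : X) : (forall z, z != y -> 0 <= a z) ->
  \esum_(z in ~` [set y]) a z = csum (fun z => if z == y then 0 else a z).
Proof.
move=> a0; rewrite csum_esum; last by move=> z; case: ifPn => // zy; exact: a0.
rewrite (esumID [set y] [set: X]); last by move=> z _; case: ifPn => // zy; exact: a0.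
rewrite [X in X + _]esum1; last by move=> z [_ /= zy]; rewrite zy eqxx.
rewrite add0e.
rewrite setTI; apply: eq_esum => z /= zy.
by move/eqP/negPf: zy => ->.
Qed.

Lemma gammaE_fin y : gammaE Gam y = (gammaR Gam y)%:E.
Proof.
case: HQ => _ [/(_ y) [g0 goo] _]; rewrite /gammaR fineK //.
by rewrite ge0_fin_numE// ltW.
Qed.

Lemma gammaR_gt0 y : (0 < gammaR Gam y)%R.
Proof.
case: HQ => _ [/(_ y) [g0 goo] _]; by rewrite -lte_fin -gammaE_fin.
Qed.

Lemma Pjump_ge0 y z : (0 <= Pjump Gam y z)%R.
Proof.
rewrite /Pjump; case: eqP => // /eqP zy.
case: HQ => Hoff _; apply: divr_ge0; first by apply: Hoff; rewrite eq_sym.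
exact/ltW/gammaR_gt0.
Qed.

Lemma Pjump_esum (u : X -> R) y : (forall z, z != y -> 0 <= (Gam y z * u z)%:E) ->
  csum (fun z => (Pjump Gam y z * u z)%:E) =
  (gammaR Gam y)^-1%:E * \esum_(z in ~` [set y]) (Gam y z * u z)%:E.
Proof.
move=> a0; rewrite esumC1// -csumZl; last by move=> z; case: ifPn => // zy; exact: a0.
congr csum; apply: funext => z; rewrite /Pjump; case: eqP => _.
  by rewrite mul0r mule0.
by rewrite -EFinM; congr EFin; rewrite mulrAC mulrC.
Qed.

Lemma csum_Pjump y : csum (fun z => (Pjump Gam y z)%:E) = 1.
Proof.
have -> : (fun z => (Pjump Gam y z)%:E) = (fun z => (Pjump Gam y z * 1)%:E).
  by apply: funext => z; rewrite mulr1.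
rewrite Pjump_esum; last first.
  by move=> z zy; case: HQ => Hoff _; rewrite mulr1 lee_fin Hoff// eq_sym.
have -> : \esum_(z in ~` [set y]) (Gam y z * 1)%:E = gammaE Gam y.
  by apply: eq_esum => z _; rewrite mulr1.
by rewrite gammaE_fin -EFinM mulVf// gt_eqF// gammaR_gt0.
Qed.

Lemma Pjump_f_sum (f : X -> R) y : in_Dom_plus Gam f ->
  csum (fun z => (Pjump Gam y z * f z)%:E) =
  ((Gen Gam f y + gammaR Gam y * f y) / gammaR Gam y)%:E.
Proof.
move=> [Hd f0].
have a0 : forall z, z != y -> 0 <= (Gam y z * f z)%:E.
  by move=> z zy; case: HQ => Hoff _; rewrite lee_fin mulr_ge0// Hoff// eq_sym.
rewrite Pjump_esum//.
have fin : \esum_(z in ~` [set y]) (Gam y z * f z)%:E \is a fin_num.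
  rewrite ge0_fin_numE; last by apply: esum_ge0 => z /= /eqP zy; apply: a0.
  have := Hd y; congr (_ < _); apply: eq_esum => z _.
  by rewrite ger0_norm.
have -> : \esum_(z in ~` [set y]) (Gam y z * f z)%:E =
   (Gen Gam f y + gammaR Gam y * f y)%R%:E.
  rewrite /Gen; case: HQ => _ [_ /(_ y) ->].
  rewrite mulNr addrAC (addrC (- _)%R) subrr add0r fineK //.
by rewrite -EFinM mulrC.
Qed.

Lemma drift_csum (f V : X -> R) (g : R -> R) y : in_Dom_plus Gam f ->
  (forall z, (0 <= V z)%R) -> (0 < g (f y))%R ->
  (forall z, V z - V y <= (f z - f y) / g (f y))%R ->
  (Gen Gam f y <= - g (f y))%R ->
  csum (fun z => (Pjump Gam y z * V z)%:E) + (gammaR Gam y)^-1%:E <= (V y)%:E.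
Proof.
move=> Hf V0 G0 K Hdr.
set G := g (f y); set c := (f y / G)%R.
have p0 := Pjump_ge0.
have H1 : csum (fun z => (Pjump Gam y z * V z)%:E + (Pjump Gam y z * c)%:E) <=
          csum (fun z => (Pjump Gam y z * V y)%:E + (Pjump Gam y z * f z * G^-1)%:E).
  apply: le_csum.
    move=> z; rewrite -EFinD lee_fin addr_ge0// mulr_ge0//.
    by rewrite /c divr_ge0// ?(ltW G0)//; case: Hf.
  move=> z; rewrite -!EFinD lee_fin.
  have := ler_wpM2l (p0 y z) (K z).
  rewrite /c => H.
  have -> : (Pjump Gam y z * f z * G^-1 = Pjump Gam y z * (f z * G^-1))%R by ring.
  move: H; rewrite /(_ / _); set P := Pjump Gam y z; set a := (f z * G^-1)%R; set b := (f y * G^-1)%R.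
  rewrite mulrBl -/a -/b. nra.
rewrite csumD in H1; last 2 first.
- by move=> z; rewrite lee_fin mulr_ge0.
- move=> z; rewrite lee_fin mulr_ge0// /c divr_ge0// ?(ltW G0)//; by case: Hf.
rewrite csumD in H1; last 2 first.
- by move=> z; rewrite lee_fin mulr_ge0.
- move=> z; rewrite lee_fin mulr_ge0// ?invr_ge0 ?(ltW G0)// mulr_ge0//; by case: Hf.
have e1 : csum (fun z => (Pjump Gam y z * c)%:E) = c%:E.
  rewrite (_ : (fun z => _) = fun z => (Pjump Gam y z)%:E * c%:E); last first.
    by apply: funext => z; rewrite EFinM.
  by rewrite csumZr ?csum_Pjump ?mul1e// => z; rewrite lee_fin.
have e2 : csum (fun z => (Pjump Gam y z * V y)%:E) = (V y)%:E.
  rewrite (_ : (fun z => _) = fun z => (Pjump Gam y z)%:E * (V y)%:E); last first.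
    by apply: funext => z; rewrite EFinM.
  by rewrite csumZr ?csum_Pjump ?mul1e// => z; rewrite lee_fin.
have e3 : csum (fun z => (Pjump Gam y z * f z * G^-1)%:E) =
    ((Gen Gam f y + gammaR Gam y * f y) / gammaR Gam y * G^-1)%:E.
  rewrite (_ : (fun z => _) = fun z => (Pjump Gam y z * f z)%:E * (G^-1)%:E); last first.
    by apply: funext => z; rewrite EFinM.
  rewrite csumZr ?Pjump_f_sum ?EFinM// => z; rewrite lee_fin mulr_ge0//; by case: Hf.
rewrite e1 e2 e3 in H1; move: H1.
have S0 : 0 <= csum (fun z => (Pjump Gam y z * V z)%:E).
  by apply: csum_ge0 => z; rewrite lee_fin mulr_ge0.
move: S0; case: (csum _) => [r||] //.
move=> r0; rewrite -!EFinD !lee_fin => H.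
have g1 := gammaR_gt0 y.
set gm := gammaR Gam y in H g1 *.
have E1 : ((Gen Gam f y + gm * f y) / gm * G^-1 = Gen Gam f y / (gm * G) + c)%R.
  by rewrite /c; field; rewrite gt_eqF// gt_eqF.
have E2 : (Gen Gam f y / (gm * G) <= - gm^-1)%R.
  have -> : (- gm^-1 = (- G) / (gm * G))%R by field; rewrite gt_eqF// gt_eqF.
  by rewrite ler_wpM2r// invr_ge0 mulr_ge0// ltW.
rewrite E1 in H; lra.
Qed.

End Jump.

Section PT.
Local Open Scope ereal_scope.
Context {R : realType}.
Lemma ptbound (s dl : R) : (0 < dl)%R -> (0 <= s)%R ->
  s%:E <= \sum_(j <oo) (if (j%:R * dl < s)%R then dl else 0%R)%:E.
Proof.
move=> d0 s0.
have ex : exists n : nat, (s <= n%:R * dl)%R.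
  exists (Num.Def.archi_bound (s / dl)).
  rewrite -ler_pdivrMr//; apply: ltW; apply: archi_boundP.
  by rewrite divr_ge0// ltW.
case: (ex_minnP ex) => N HN Hmin.
apply: (le_trans _ (nneseries_lim_ge N _)); last first.
  by move=> n _ _; case: ifP => _; rewrite lee_fin// ltW.
have -> : \sum_(0 <= i < N | true) (if (i%:R * dl < s)%R then dl else 0%R)%:E =
          \sum_(0 <= i < N) dl%:E.
  rewrite big_nat_cond [RHS]big_nat_cond; apply: eq_bigr => i /andP[/andP[_ iN] _].
  case: ltP => // H; exfalso.
  by have := Hmin i H; rewrite leqNgt iN.
rewrite sumEFin sumr_const_nat subn0 lee_fin -mulr_natr mulrC.
by [].
Qed.
End PT.
Section GEO.
Local Open Scope ereal_scope.
Context {R : realType}.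
Lemma geo_bound (x : R) : (0 < x)%R -> (x < 1)%R ->
  \sum_(j <oo) (x ^+ j)%:E <= ((1 - x)^-1)%:E.
Proof.
move=> x0 x1.
apply: lime_le; first by apply: is_cvg_nneseries => n _ _; rewrite lee_fin exprn_ge0// ltW.
apply: nearW => n.
rewrite /= sumEFin lee_fin.
have := @geometric_le_lim R n 1 x ler01 x0; rewrite gtr0_norm// mul1r => /(_ x1).
apply: le_trans; rewrite le_eqVlt; apply/orP; left; apply/eqP.
rewrite /series /=; apply: eq_bigr => k _; by rewrite /geometric /= mul1r.
Qed.
End GEO.

Section Chain.
Local Open Scope ereal_scope.
Context {R : realType} {X : countType} (Gam : X -> X -> R).
Hypothesis HQ : Qmatrix Gam.
Context (x0 : X) {d : measure_display} {T : measurableType d}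
  (P : probability T R) (xi : nat -> T -> X) (sigma : nat -> T -> R).
Hypothesis HC : is_CTMC Gam P x0 xi sigma.

Definition Ev (j n : nat) (xs : nat -> X) (ts : nat -> R) : set T :=
  [set w | (forall k, (j <= k <= n)%N -> xi k w = xs k) /\
           (forall k, (k < n)%N -> (ts k.+1 < sigma k.+1 w)%R)].

Lemma meas_xi k y : measurable [set w | xi k w = y].
Proof. by case: HC => H _; apply: H. Qed.

Lemma meas_sigma_gt k (t : R) : measurable [set w | (t < sigma k w)%R].
Proof.
case: HC => _ [H _].
have := H k measurableT `]t, +oo[%classic (measurable_itv _).
rewrite setTI; congr measurable; apply/seteqP; split => w /=;
  by rewrite in_itv /= andbT.
Qed.

Lemma meas_Ev j n xs ts : measurable (Ev j n xs ts).
Proof.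
have -> : Ev j n xs ts =
  (\bigcap_(k in [set k | (j <= k <= n)%N]) [set w | xi k w = xs k]) `&`
  (\bigcap_(k in [set k | (k < n)%N]) [set w | (ts k.+1 < sigma k.+1 w)%R]).
  by apply/seteqP; split => w [H1 H2]; split => k Hk; [exact: H1|exact: H2|exact: H1|exact: H2].
apply: measurableI; apply: bigcap_measurableType => k _.
  exact: meas_xi.
exact: meas_sigma_gt.
Qed.

Fixpoint mu (j : nat) : X -> \bar R :=
  match j with
  | 0%N => fun y => ((y == x0)%:R)%:E
  | j'.+1 => fun z => csum (fun a => mu j' a * (Pjump Gam a z)%:E)
  end.

Lemma mu_ge0 j y : 0 <= mu j y.
Proof.
elim: j y => [|j IH] y /=; first by rewrite lee_fin.
apply: csum_ge0 => a; rewrite mule_ge0// lee_fin; exact: Pjump_ge0.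
Qed.

Definition upd (xs : nat -> X) (j : nat) (a : X) : nat -> X :=
  fun k => if k == j then a else xs k.

Definition cset (F : X -> set T) (i : nat) : set T :=
  if @pickle_inv X i is Some a then F a else set0.

Lemma cset_disj (F : X -> set T) :
  (forall a b w, F a w -> F b w -> a = b) -> trivIset setT (cset F).
Proof.
move=> H i k _ _ [w []]; rewrite /cset.
case Ei: pickle_inv => [a|//]; case Ek: pickle_inv => [b|//] Fa Fb.
have ab := H _ _ _ Fa Fb; subst b.
by rewrite -(@pickle_invK X i) -(@pickle_invK X k) Ei Ek.
Qed.

Lemma cset_bigcup (F : X -> set T) : \bigcup_i cset F i = \bigcup_(a in setT) F a.
Proof.
apply/seteqP; split => w.
  by move=> [i _]; rewrite /cset; case: pickle_inv => // a Fa; exists a.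
move=> [a _ Fa]; exists (pickle a) => //; by rewrite /cset pickleK_inv.
Qed.

Lemma P_cunion (F : X -> set T) : (forall a, measurable (F a)) ->
  (forall a b w, F a w -> F b w -> a = b) ->
  P (\bigcup_(a in setT) F a) = csum (fun a => P (F a)).
Proof.
move=> mF dF; rewrite -cset_bigcup measure_bigcup //; last exact: cset_disj.
  transitivity (\sum_(i <oo) P (cset F i)).
    by apply: eq_eseriesl => i; rewrite in_setT.
  apply: eq_eseriesr => i _; rewrite /cset /cterm; case: pickle_inv => //.
by move=> i _; rewrite /cset; case: pickle_inv.
Qed.

Definition EvC (n : nat) (xs : nat -> X) (ts : nat -> R) : set T :=
  [set w | (forall k, (k <= n)%N -> xi k w = xs k) /\
           (forall k, (k < n)%N -> (ts k.+1 < sigma k.+1 w)%R)].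

Definition pfac (xs : nat -> X) (ts : nat -> R) (k : nat) : R :=
  (Pjump Gam (xs k) (xs k.+1) * expR (- (gammaR Gam (xs k) * ts k.+1)))%R.

Lemma claim j : forall n xs ts, (j <= n)%N -> (forall k, (0 <= ts k)%R) ->
  (forall k, (k < j)%N -> ts k.+1 = 0%R) ->
  P (Ev j n xs ts) = mu j (xs j) * (\prod_(j <= k < n) pfac xs ts k)%:E.
Proof.
elim: j => [|j IH] n xs ts jn ts0 tsj.
  case: HC => _ [_ [_ H]].
  have H' := H n xs ts ts0.
  have -> : Ev 0 n xs ts = EvC n xs ts.
    by apply/seteqP; split => w [H1 H2]; split => // k Hk; apply: H1.
  by rewrite /EvC H' EFinM big_mkord.
have jn' : (j <= n)%N by apply: ltnW.
have E : Ev j.+1 n xs ts = \bigcup_(a in setT) Ev j n (upd xs j a) ts.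
  apply/seteqP; split => w.
    move=> [H1 H2]; exists (xi j w) => //; split => // k /andP[jk kn].
    rewrite /upd; case: eqP => [->//|/eqP kj].
    by apply: H1; rewrite kn andbT ltn_neqAle eq_sym kj.
  move=> [a _ [H1 H2]]; split => // k /andP[jk kn].
  rewrite (H1 k); last by rewrite kn andbT ltnW.
  by rewrite /upd gtn_eqF.
rewrite E P_cunion; last 2 first.
- by move=> a; apply: meas_Ev.
- move=> a b w [H1 _] [H2 _].
  have := H1 j; rewrite leqnn jn' => /(_ isT); rewrite /upd eqxx => <-.
  by have := H2 j; rewrite leqnn jn' => /(_ isT); rewrite /upd eqxx.
set rest := (\prod_(j.+1 <= k < n) pfac xs ts k)%R.
transitivity (csum (fun a => mu j a * (Pjump Gam a (xs j.+1))%:E * rest%:E)).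
  congr csum; apply: funext => a; rewrite IH //; last by move=> k kj; apply: tsj; apply: ltnW.
  rewrite /upd eqxx -muleA -EFinM; congr (_ * _%:E).
  rewrite big_ltn // /pfac /= eqxx gtn_eqF // (tsj j (ltnSn j)) mulr0 oppr0 expR0 mulr1.
  congr (_ * _)%R; apply: eq_big_nat => k /andP[jk kn].
  by rewrite !gtn_eqF// ltnW.
rewrite csumZr //= => a; rewrite mule_ge0 ?mu_ge0// lee_fin; exact: Pjump_ge0.
Qed.

Definition G (k : nat) (y : X) : set T := Ev k k (fun _ => y) (fun _ => 0%R).

Lemma PG k y : P (G k y) = mu k y.
Proof.
by rewrite /G claim// big_geq// mule1.
Qed.

Lemma mu_fin k y : mu k y \is a fin_num.
Proof. by rewrite -PG fin_num_measure//; exact: meas_Ev. Qed.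

Definition GS (k : nat) (y : X) (t : R) : set T :=
  G k y `&` [set w | (t < sigma k.+1 w)%R].

Definition xsz (k : nat) (y z : X) : nat -> X := fun i => if i == k.+1 then z else y.
Definition tsk (k : nat) (t : R) : nat -> R := fun i => if i == k.+1 then t else 0%R.

Lemma GS_union k y t : GS k y t = \bigcup_(z in setT) Ev k k.+1 (xsz k y z) (tsk k t).
Proof.
apply/seteqP; split => w.
  move=> [[H1 H2] /= H3]; exists (xi k.+1 w) => //; split.
    move=> i /andP[ki ik]; rewrite /xsz; case: eqP => [->//|/eqP ik1].
    apply: H1; rewrite ki /= -ltnS ltn_neqAle ik1 ik //.
  move=> i; rewrite ltnS leq_eqVlt => /orP[/eqP ->|ik]; first by rewrite /tsk eqxx.
  by rewrite /tsk eqSS (ltn_eqF ik); apply: H2.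
move=> [z _ [H1 H2]]; split; last first.
  by have := H2 k (ltnSn k); rewrite /tsk eqxx.
split.
  move=> i /andP[ki ik]; rewrite H1; last by rewrite ki /= (leq_trans ik).
  by rewrite /xsz (ltn_eqF (leq_ltn_trans ik (ltnSn k))).
move=> i ik; have := H2 i (ltn_trans ik (ltnSn k)).
by rewrite /tsk eqSS (ltn_eqF ik).
Qed.

Lemma PGS k y t : (0 <= t)%R ->
  P (GS k y t) = mu k y * (expR (- (gammaR Gam y * t)))%:E.
Proof.
move=> t0; rewrite GS_union P_cunion; last 2 first.
- by move=> a; apply: meas_Ev.
- move=> a b w [H1 _] [H2 _].
  have := H1 k.+1; rewrite leqnSn leqnn => /(_ isT); rewrite /xsz eqxx => <-.
  by have := H2 k.+1; rewrite leqnSn leqnn => /(_ isT); rewrite /xsz eqxx.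
transitivity (csum (fun z => (Pjump Gam y z)%:E * (mu k y * (expR (- (gammaR Gam y * t)))%:E))).
  congr csum; apply: funext => z; rewrite claim //; last 2 first.
  - by move=> i; rewrite /tsk; case: eqP.
  - by move=> i ik; rewrite /tsk eqSS (ltn_eqF ik).
  rewrite big_nat1 /pfac /xsz /tsk eqxx (ltn_eqF (ltnSn k)).
  by rewrite EFinM muleCA.
have fm := mu_fin k y.
rewrite -(fineK fm) -EFinM csumZr; last by move=> z; rewrite lee_fin; exact: Pjump_ge0.
by rewrite csum_Pjump //; exact: mul1e.
Qed.

Lemma csumZl_fin (c : \bar R) (h : X -> \bar R) : c \is a fin_num ->
  (forall y, 0 <= h y) -> csum (fun z => c * h z) = c * csum h.
Proof. by move=> fc h0; rewrite -(fineK fc) csumZl. Qed.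

Lemma csum_mu k : csum (mu k) = 1.
Proof.
elim: k => [|k IH] /=.
  rewrite (@csum_single R X _ x0); first by rewrite eqxx.
    by move=> y; rewrite lee_fin.
  by move=> y /negPf ->.
rewrite csum_swap; last by move=> a z; rewrite mule_ge0 ?mu_ge0// lee_fin; exact: Pjump_ge0.
rewrite -[RHS]IH; congr csum; apply: funext => a.
rewrite csumZl_fin ?mu_fin ?csum_Pjump ?mule1// => z.
rewrite lee_fin; exact: Pjump_ge0.
Qed.

Lemma G_disj k a b w : G k a w -> G k b w -> a = b.
Proof.
move=> [H1 _] [H2 _].
have := H1 k; rewrite leqnn => /(_ isT) <-.
by have := H2 k; rewrite leqnn => /(_ isT).
Qed.

Lemma meas_sig k : measurable_fun setT (fun w => (sigma k w)%:E).
Proof. by apply/measurable_EFinP; case: HC => _ [H _]. Qed.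

Lemma sig_ge0 k w : (0 <= sigma k w)%R.
Proof. by case: HC => _ [_ [H _]]. Qed.

Definition cst_c : R := (1 - expR (-1))^-1.

Lemma int_G_bound k y :
  \int[P]_(w in G k y) (sigma k.+1 w)%:E <=
  cst_c%:E * (mu k y * ((gammaR Gam y)^-1)%:E).
Proof.
have gy := @gammaR_gt0 R X Gam HQ y.
set dl := ((gammaR Gam y)^-1)%R.
have dl0 : (0 < dl)%R by rewrite invr_gt0.
pose A (j : nat) := [set w | ((j%:R * dl) < sigma k.+1 w)%R].
have mA j : measurable (A j) by apply: meas_sigma_gt.
have mG : measurable (G k y) by apply: meas_Ev.
have mh j : measurable_fun (G k y) (fun w => (dl * \1_(A j) w)%:E).
  apply/measurable_EFinP; apply: measurable_funM; first exact: measurable_cst.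
  exact: measurable_indic.
apply: (@le_trans _ _ (\int[P]_(w in G k y) \sum_(j <oo) (dl * \1_(A j) w)%:E)).
  apply: ge0_le_integral => //.
  - by move=> w _; rewrite lee_fin sig_ge0.
  - by apply: measurable_funS (meas_sig k.+1).
  - have h0 : forall j w, G k y w -> xpredT j -> 0 <= (dl * \1_(A j) w)%:E.
      by move=> j w _ _; rewrite lee_fin mulr_ge0// ?ltW// indicE.
    have H := @ge0_emeasurable_sum _ _ R (G k y) (fun j w => (dl * \1_(A j) w)%:E) xpredT h0 (fun j _ => mh j).
    exact: H.
  - move=> w _; apply: (le_trans (ptbound _ _ dl0 (sig_ge0 k.+1 w))).
    apply: lee_nneseries; first by move=> j _ _; case: ifP; rewrite lee_fin// ltW.
    move=> j _; rewrite indicE /A; case: ifPn => H.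
      by rewrite mem_set// mulr1.
    by rewrite lee_fin mulr_ge0// ltW.
rewrite integral_nneseries//; last first.
  by move=> j w _; rewrite lee_fin mulr_ge0// ?ltW// indicE.
have fm := mu_fin k y.
set m := fine (mu k y).
apply: (@le_trans _ _ (\sum_(j <oo) ((dl * m)%:E * ((expR (-1)) ^+ j)%:E))).
  apply: lee_nneseries.
    by move=> j _ _; apply: integral_ge0 => w _; rewrite lee_fin mulr_ge0// ?ltW// indicE.
  move=> j _.
  rewrite (@integralZl_indic _ _ _ P _ mG (fun=> A j)) //; last first.
    by move=> dlneg; exfalso; move: dlneg; rewrite ltNge ltW.
  rewrite integral_indic// setIC.
  rewrite (_ : G k y `&` A j = GS k y (j%:R * dl)) //.
  rewrite [X in _ * X <= _](PGS k y); last by rewrite mulr_ge0// ltW.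
  rewrite -(fineK fm) -/m -!EFinM lee_fin.
  have -> : (gammaR Gam y * (j%:R * dl) = j%:R)%R.
    by rewrite /dl mulrCA mulfV ?mulr1// gt_eqF.
  rewrite (_ : (1 *- j = j%:R * -1 :> R)%R); last by rewrite mulrN1.
  by rewrite expRM_natl mulrA.
rewrite nneseriesZl; last by move=> j _; rewrite lee_fin exprn_ge0// expR_ge0.
have e0 : (0 < expR (-1 : R))%R by apply: expR_gt0.
have e1 : (expR (-1 : R) < 1)%R by rewrite expR_lt1 ltrN10.
apply: (@le_trans _ _ ((dl * m)%:E * cst_c%:E)).
  apply: lee_wpmul2l; last exact: geo_bound.
  by rewrite lee_fin mulr_ge0 ?fine_ge0 ?mu_ge0// ltW.
by rewrite -(fineK fm) -/m -!EFinM lee_fin le_eqVlt; apply/orP; left; apply/eqP; ring.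
Qed.

Lemma int_sigma k : \int[P]_w (sigma k.+1 w)%:E <=
  cst_c%:E * csum (fun y => mu k y * ((gammaR Gam y)^-1)%:E).
Proof.
set U := \bigcup_i cset (G k) i.
have mcs : forall i, measurable (cset (G k) i).
  by move=> i; rewrite /cset; case: pickle_inv => // a; exact: meas_Ev.
have mU : measurable U by apply: bigcupT_measurable.
have PU : P U = 1.
  rewrite /U cset_bigcup P_cunion; last 2 first.
  - by move=> a; exact: meas_Ev.
  - exact: G_disj.
  rewrite -(csum_mu k); congr csum; apply: funext => a; exact: PG.
have PUc : P (~` U) = 0 by rewrite probability_setC// PU subee.
have mf : measurable_fun setT (fun w => (sigma k.+1 w)%:E) := meas_sig k.+1.
rewrite -(setUv U) ge0_integral_setU //; last 4 first.
- exact: measurableC.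
- by rewrite setUv.
- by move=> w _; rewrite lee_fin sig_ge0.
- by apply/disj_setPCl.
rewrite (null_set_integral (measurableC mU)) ?adde0 //; last first.
  exact: measurable_funS mf.
rewrite ge0_integral_bigcup //; last 3 first.
- exact: measurable_funS mf.
- by move=> w _; rewrite lee_fin sig_ge0.
- apply: cset_disj; exact: G_disj.
have c0 : (0 <= cst_c)%R.
  by rewrite /cst_c invr_ge0 subr_ge0 ltW// expR_lt1 ltrN10.
rewrite -csumZl; last first.
  by move=> y; rewrite mule_ge0 ?mu_ge0// lee_fin invr_ge0 ltW// gammaR_gt0.
apply: lee_nneseries.
  by move=> i _ _; apply: integral_ge0 => w _; rewrite lee_fin sig_ge0.
move=> i _; rewrite /cset /cterm; case: pickle_inv => [y|].
  exact: int_G_bound.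
by rewrite integral_set0.
Qed.

Lemma supermart (V : X -> R) : (forall y, (0 <= V y)%R) ->
  (forall y, csum (fun z => (Pjump Gam y z * V z)%:E) + ((gammaR Gam y)^-1)%:E <= (V y)%:E) ->
  forall N, \sum_(0 <= n < N) csum (fun y => mu n y * ((gammaR Gam y)^-1)%:E)
            + csum (fun y => mu N y * (V y)%:E) <= (V x0)%:E.
Proof.
move=> V0 Hd; elim=> [|N IH].
  rewrite big_geq// add0e (@csum_single R X _ x0) /=.
  - by rewrite eqxx mul1e.
  - by move=> y; rewrite mule_ge0// lee_fin.
  - by move=> y /negPf ->; rewrite mul0e.
apply: le_trans IH.
rewrite big_nat_recr//= -addeA leeD2l//.
have pg y z : 0 <= (Pjump Gam y z)%:E by rewrite lee_fin; exact: Pjump_ge0.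
have E : csum (fun z => mu N.+1 z * (V z)%:E) =
         csum (fun a => mu N a * csum (fun z => (Pjump Gam a z * V z)%:E)).
  transitivity (csum (fun z => csum (fun a => mu N a * (Pjump Gam a z)%:E * (V z)%:E))).
    congr csum; apply: funext => z /=; rewrite csumZr// => a.
    by rewrite mule_ge0 ?mu_ge0.
  rewrite csum_swap; last first.
    by move=> a z; rewrite !mule_ge0 ?mu_ge0// lee_fin.
  congr csum; apply: funext => a.
  rewrite -csumZl_fin ?mu_fin//; last by move=> z; rewrite lee_fin mulr_ge0// Pjump_ge0.
  congr csum; apply: funext => z; by rewrite -muleA -EFinM.
rewrite E -csumD; last 2 first.
- by move=> y; rewrite mule_ge0 ?mu_ge0// lee_fin invr_ge0 ltW// gammaR_gt0.
- move=> a; rewrite mule_ge0 ?mu_ge0// csum_ge0// => z.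
  by rewrite lee_fin mulr_ge0// Pjump_ge0.
apply: le_csum.
  move=> a; rewrite adde_ge0// mule_ge0 ?mu_ge0// ?csum_ge0// ?lee_fin ?invr_ge0 ?ltW ?gammaR_gt0//.
  by move=> z; rewrite lee_fin mulr_ge0// Pjump_ge0.
move=> a; rewrite -ge0_muleDr; last 2 first.
- by rewrite lee_fin invr_ge0 ltW// gammaR_gt0.
- by rewrite csum_ge0// => z; rewrite lee_fin mulr_ge0// Pjump_ge0.
by apply: lee_wpmul2l; [exact: mu_ge0|rewrite addeC; exact: Hd].
Qed.

Lemma chain_main (V : X -> R) : (forall y, (0 <= V y)%R) ->
  (forall y, csum (fun z => (Pjump Gam y z * V z)%:E) + ((gammaR Gam y)^-1)%:E <= (V y)%:E) ->
  \int[P]_w zeta sigma w < +oo.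
Proof.
move=> V0 Hd.
have ser : forall w, zeta sigma w = \sum_(n <oo) (sigma n.+1 w)%:E.
  move=> w; rewrite /zeta -nneseries_addn; last by move=> i; rewrite lee_fin sig_ge0.
  by apply: eq_eseriesr => n _; rewrite addn1.
rewrite (eq_integral (fun w => \sum_(n <oo) (sigma n.+1 w)%:E)); last first.
  by move=> w _; exact: ser.
rewrite integral_nneseries//; last 2 first.
- by move=> n; exact: meas_sig.
- by move=> n w _; rewrite lee_fin sig_ge0.
have c0 : (0 <= cst_c)%R.
  by rewrite /cst_c invr_ge0 subr_ge0 ltW// expR_lt1 ltrN10.
have tg0 n y : 0 <= mu n y * ((gammaR Gam y)^-1)%:E.
  by rewrite mule_ge0 ?mu_ge0// lee_fin invr_ge0 ltW// gammaR_gt0.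
apply: (@le_lt_trans _ _ (cst_c%:E * (V x0)%:E)); last by rewrite -EFinM ltry.
apply: (@le_trans _ _ (\sum_(n <oo) (cst_c%:E * csum (fun y => mu n y * ((gammaR Gam y)^-1)%:E)))).
  apply: lee_nneseries; last by move=> n _; exact: int_sigma.
  by move=> n _ _; apply: integral_ge0 => w _; rewrite lee_fin sig_ge0.
rewrite nneseriesZl; last by move=> n _; apply: csum_ge0.
apply: lee_wpmul2l; first by rewrite lee_fin.
apply: lime_le; first by apply: is_cvg_nneseries => n _ _; apply: csum_ge0.
apply: nearW => N /=.
have H := supermart V V0 Hd N. apply: (le_trans _ H).
by rewrite leeDl// csum_ge0// => y; rewrite mule_ge0 ?mu_ge0// lee_fin.
Qed.

End Chain.

Section Anal.
Context {R : realType} (g : R -> R).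
Hypothesis Hgpos : forall y : R, 0 < y -> 0 < g y.
Hypothesis Hgincr : {in `]0, +oo[ &, {homo g : y z / y <= z}}.

Let D := `]0%R, +oo[%classic : set R.

Lemma gmono s y : 0 < s -> s <= y -> g s <= g y.
Proof.
move=> s0 sy; have y0 := lt_le_trans s0 sy.
have Hs : s \in `]0, +oo[ by rewrite in_itv /= andbT.
have Hy : y \in `]0, +oo[ by rewrite in_itv /= andbT.
exact: Hgincr Hs Hy sy.
Qed.

Lemma meas_invg : measurable_fun D (fun y => (g y)^-1).
Proof.
apply: (measurability (@RGenCInfty.G R)) => [|/= _ [_] [r] -> <-].
  exact: RGenCInfty.measurableE.
apply: is_interval_measurable => s t [Ds /= Hs] [Dt /= Ht] u /andP[su ut].
have Du : D u.
  move: Ds; rewrite /D /= !in_itv /= !andbT => s0; exact: lt_le_trans su.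
split => //=.
have u0 : 0 < u by move: Du; rewrite /D /= in_itv /= andbT.
have t0 : 0 < t by move: Dt; rewrite /D /= in_itv /= andbT.
move: Hs Ht; rewrite !in_itv /= !andbT => Hs Ht.
apply: (le_trans Ht); rewrite lef_pV2 ?posrE ?Hgpos//.
by apply: Hgincr; rewrite ?inE /= ?in_itv /= ?andbT.
Qed.

Lemma meas_invgE (A : set R) : measurable A -> A `<=` D ->
  measurable_fun A (fun y => ((g y)^-1)%:E).
Proof.
move=> mA AD; apply/measurable_EFinP; apply: measurable_funS meas_invg => //.
exact: measurable_itv.
Qed.

Definition Fi (t : R) : \bar R :=
  (\int[lebesgue_measure]_(y in `]0%R, t[%classic) ((g y)^-1)%:E)%E.

Lemma invg_ge0 y : 0 < y -> 0 <= (g y)^-1.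
Proof. by move=> y0; rewrite invr_ge0 ltW// Hgpos. Qed.

Lemma itv_sub s t : `]s, t[%classic `<=` D \/ True.
Proof. by right. Qed.



Lemma sub_D0 (t : R) (b2 : bool) :
  [set` Interval (BSide false 0) (BSide b2 t)] `<=` D.
Proof.
by move=> u /=; rewrite /D /= !in_itv /= andbT => /andP[].
Qed.

Lemma sub_D1 (s t : R) (b2 : bool) : 0 < s ->
  [set` Interval (BSide true s) (BSide b2 t)] `<=` D.
Proof.
move=> s0 u /=; rewrite /D /= !in_itv /= andbT => /andP[H _].
exact: lt_le_trans H.
Qed.

Local Open Scope ereal_scope.

Lemma Fi_ge0 t : 0 <= Fi t.
Proof.
apply: integral_ge0 => y /=; rewrite in_itv /= => /andP[y0 _].
by rewrite lee_fin invg_ge0.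
Qed.

Lemma itv_split {s t : R} : (0 < s)%R -> (s <= t)%R ->
  `]0%R, t[%classic = `]0%R, s[%classic `|` `[s, t[%classic.
Proof. by move=> s0 st; apply: itv_bndbnd_setU; rewrite /= bnd_simp. Qed.

Lemma Fi_split {s t : R} : (0 < s)%R -> (s <= t)%R ->
  Fi t = Fi s + \int[lebesgue_measure]_(y in `[s, t[%classic) ((g y)^-1)%:E.
Proof.
move=> s0 st; rewrite /Fi (itv_split s0 st) ge0_integral_setU //.
- by rewrite -(itv_split s0 st); apply: meas_invgE => //; exact: sub_D0.
- move=> y; rewrite -(itv_split s0 st) /= in_itv /= => /andP[y0 _].
  by rewrite lee_fin invg_ge0.
- apply/disj_setPS => y [] /=; rewrite !in_itv /= => /andP[_ ys] /andP[sy _].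
  by move: (lt_le_trans ys sy); rewrite ltxx.
Qed.

Lemma int_cst_itv (s t r : R) : (s <= t)%R ->
  \int[lebesgue_measure]_(y in `[s, t[%classic) (r%:E) = (r * (t - s))%:E.
Proof.
move=> st.
rewrite integral_cst; last exact: measurable_itv.
rewrite /= lebesgue_measure_itv /= lte_fin.
case: ltP => [_|]; first by rewrite -EFinD -EFinM.
move=> ts; have -> : t = s by apply/eqP; rewrite eq_le st ts.
by rewrite subrr mulr0 mule0.
Qed.

Lemma int_upper {s t : R} : (0 < s)%R -> (s <= t)%R ->
  \int[lebesgue_measure]_(y in `[s, t[%classic) ((g y)^-1)%:E <= ((g s)^-1 * (t - s))%:E.
Proof.
move=> s0 st; rewrite -int_cst_itv//.
apply: ge0_le_integral.
- exact: measurable_itv.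
- move=> y /=; rewrite in_itv /= => /andP[sy _].
  by rewrite lee_fin invg_ge0// (lt_le_trans s0 sy).
- by apply: meas_invgE => //; exact: sub_D1.
- exact: measurable_cst.
- move=> y /=; rewrite in_itv /= => /andP[sy _].
  have y0 := lt_le_trans s0 sy.
  rewrite lee_fin lef_pV2 ?posrE ?Hgpos//.
  exact: gmono.
Qed.

Lemma int_lower {s t : R} : (0 < s)%R -> (s <= t)%R ->
  ((g t)^-1 * (t - s))%:E <= \int[lebesgue_measure]_(y in `[s, t[%classic) ((g y)^-1)%:E.
Proof.
move=> s0 st; rewrite -int_cst_itv//.
have t0 := lt_le_trans s0 st.
apply: ge0_le_integral.
- exact: measurable_itv.
- by move=> y _; rewrite lee_fin invg_ge0.
- exact: measurable_cst.
- by apply: meas_invgE => //; exact: sub_D1.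
- move=> y /=; rewrite in_itv /= => /andP[sy yt].
  have y0 := lt_le_trans s0 sy.
  rewrite lee_fin lef_pV2 ?posrE ?Hgpos//.
  exact: gmono (ltW yt).
Qed.

Variable b : R.
Hypothesis Hgint : Fi b < +oo.

Lemma Fi_fin {t} : (0 < t)%R -> (t <= b)%R -> Fi t \is a fin_num.
Proof.
move=> t0 tb; rewrite ge0_fin_numE ?Fi_ge0//.
apply: le_lt_trans Hgint; rewrite (Fi_split t0 tb) leeDl//.
apply: integral_ge0 => y /=; rewrite in_itv /= => /andP[ty _].
by rewrite lee_fin invg_ge0// (lt_le_trans t0 ty).
Qed.

Lemma Fi_K (s t : R) : (0 < s)%R -> (0 < t)%R -> (s <= b)%R -> (t <= b)%R ->
  (fine (Fi t) - fine (Fi s) <= (t - s) / g s)%R.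
Proof.
move=> s0 t0 sb tb.
have fs := Fi_fin s0 sb; have ft := Fi_fin t0 tb.
have gs := Hgpos _ s0; have gt := Hgpos _ t0.
case: (leP s t) => st.
  have := int_upper s0 st; rewrite (Fi_split s0 st) in ft *.
  move: ft; rewrite fin_numD => /andP[_ fI].
  rewrite fineD// -(fineK fI) lee_fin => H.
  by rewrite addrAC subrr add0r mulrC.
have st' := ltW st.
have := int_lower t0 st'; rewrite (Fi_split t0 st') in fs *.
move: fs; rewrite fin_numD => /andP[_ fI].
rewrite (fineD ft fI) -(fineK fI) lee_fin => H.
rewrite opprD addrA subrr add0r.
have -> : ((t - s) / g s = - ((g s)^-1 * (s - t)))%R by ring.
by rewrite lerN2.
Qed.

End Anal.

Theorem proposition1p1 (R : realType) (X : countType) (Gam : X -> X -> R)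
  (X_infinite : ~ finite_set [set: X])
  (HQ : Qmatrix Gam) (Hirr : jump_irreducible Gam)
  (f : X -> R) (Hf : in_Dom_plus Gam f) (Hfpos : forall x, 0 < f x)
  (Hfbdd : exists M : R, forall x, f x <= M)
  (g : R -> R)
  (Hgpos : forall y : R, 0 < y -> 0 < g y)
  (Hgincr : {in `]0, +oo[ &, {homo g : y z / y <= z}})
  (Hgint : (\int[lebesgue_measure]_(y in `]0%R, sup (range f)[%classic) ((g y)^-1)%:E
              < +oo)%E)
  (Hdrift : forall x, Gen Gam f x <= - g (f x)) :
  forall (x : X) (d : measure_display) (T : measurableType d)
    (P : probability T R) (xi : nat -> T -> X) (sigma : nat -> T -> R),
    is_CTMC Gam P x xi sigma ->
    (\int[P]_w zeta sigma w < +oo)%E.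
Proof.
move=> x d T P xi sigma HC.
set b := sup (range f).
have fb : forall z, f z <= b.
  move=> z; apply: ub_le_sup; last by exists z.
  by case: Hfbdd => M HM; exists M => _ [y _ <-]; exact: HM.
have Hgint' : (Fi g b < +oo)%E := Hgint.
pose V := fun y => fine (Fi g (f y)).
have V0 : forall y, 0 <= V y.
  by move=> y; rewrite /V fine_ge0// (Fi_ge0 _ Hgpos).
apply: (chain_main _ HQ _ _ _ _ HC V V0) => y.
apply: (drift_csum _ HQ _ _ _ _ Hf V0 (Hgpos _ (Hfpos y))) => //.
move=> z; exact: (Fi_K _ Hgpos Hgincr _ Hgint' _ _ (Hfpos y) (Hfpos z) (fb y) (fb z)).
Qed.
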